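(* Let $f(y\mid\vec x)$ be a conditional density of $Y\in\mathbb R$ given $\vec X=\vec x\in\mathcal X$, continuous as a function of $y$ for every $\vec x$, and suppose $\widehat f=f$. For $\vec x\in\mathcal X$, $t\ge0$ let $g_{\vec x}(t)=\int_{\{y:f(y\mid\vec x)\ge t\}}f(y\mid\vec x)\,dy$, and define the profile distance $d_g(\vec x_a,\vec x_b)=\left(\int_0^\infty (g_{\vec x_a}(t)-g_{\vec x_b}(t))^2\,dt\right)^{1/2}$. For $\vec x\in\mathcal X$ and $\alpha\in(0,1)$ let $t^*(\vec x,\alpha)$ be the cutoff of the oracle band for $f(\cdot\mid\vec x)$ with coverage $1-\alpha$, i.e. the value with $\{y: f(y\mid\vec x)\ge t^*(\vec x,\alpha)\}$ the smallest region with probability $1-\alpha$ (so $g_{\vec x}(t^*(\vec x,\alpha))=1-\alpha$). Let $\sim$ be the equivalence relation $\vec x_a\sim\vec x_b\iff d_g(\vec x_a,\vec x_b)=0$. Then: (i) if $\vec x_a\sim\vec x_b$, then $t^*(\vec x_a,\alpha)=t^*(\vec x_b,\alpha)$ for every $\alpha\in(0,1)$; (ii) if $\sim'$ is any equivalence relation on $\mathcal X$ such that $\vec x_a\sim'\vec x_b$ implies $t^*(\vec x_a,\alpha)=t^*(\vec x_b,\alpha)$ for every $\alpha\in(0,1)$, then $\vec x_a\sim'\vec x_b\Rightarrow\vec x_a\sim\vec x_b$. *)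

(* Defs.v *)
From HB Require Import structures.
From mathcomp Require Import all_boot all_order all_algebra.
From mathcomp Require Import all_classical all_reals all_analysis.
Set Implicit Arguments. Unset Strict Implicit. Unset Printing Implicit Defensive.
Import Order.TTheory GRing.Theory Num.Theory.
Import numFieldNormedType.Exports.
Local Open Scope classical_set_scope.
Local Open Scope ring_scope.

(* f : X -> R -> R is a family of conditional densities f(y | x). *)

Definition gprof (R : realType) (X : Type) (f : X -> R -> R) (x : X) (t : R) : R :=
  Rintegral (@lebesgue_measure R) [set y | t <= f x y] (f x).

Definition dprof (R : realType) (X : Type) (f : X -> R -> R) (xa xb : X) : \bar R :=
  sqrte (\int[@lebesgue_measure R]_(t in `[0, +oo[%classic)
           ((gprof f xa t - gprof f xb t) ^+ 2)%:E).

(* cutoff of the oracle HPD band of coverage 1 - alpha: the largest level t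
   such that {y : f(y|x) >= t} still has probability >= 1 - alpha *)
Definition tstar (R : realType) (X : Type) (f : X -> R -> R) (x : X) (alpha : R) : R :=
  sup [set t | 0 <= t /\ 1 - alpha <= gprof f x t].

Definition prof_equiv (R : realType) (X : Type) (f : X -> R -> R) (xa xb : X) : Prop :=
  dprof f xa xb = 0%E.

(* Main.v *)
Require Import Defs.
From HB Require Import structures.
From mathcomp Require Import all_boot all_order all_algebra.
From mathcomp Require Import all_classical all_reals all_analysis.
From mathcomp Require Import measurable_realfun ring lra.
Set Implicit Arguments. Unset Strict Implicit. Unset Printing Implicit Defensive.
Import Order.TTheory GRing.Theory Num.Theory.
Import numFieldNormedType.Exports.
Local Open Scope classical_set_scope.
Local Open Scope ring_scope.

Section dens.
Variables (R : realType) (h : R -> R).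
Hypotheses (h0 : forall y, 0 <= h y) (hc : continuous h)
  (hint : (\int[@lebesgue_measure R]_y (h y)%:E = 1)%E).
Local Notation mu := (@lebesgue_measure R).

Let mh : measurable_fun setT h. Proof. exact: continuous_measurable_fun. Qed.

Let mhE : measurable_fun setT (fun y => (h y)%:E).
Proof. exact/measurable_EFinP. Qed.

Let mle t : measurable [set y | t <= h y].
Proof.
have := mh measurableT (measurable_itv `[t, +oo[); rewrite setTI.
congr measurable; apply/seteqP; split => y /=; rewrite in_itv/= andbT //.
Qed.

Let mlt t : measurable [set y | h y < t].
Proof.
have := mh measurableT (measurable_itv `]-oo, t[); rewrite setTI.
congr measurable; apply/seteqP; split => y /=; rewrite in_itv/= //.
Qed.

Let I A := (\int[mu]_(y in A) (h y)%:E)%E.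

Let I_ge0 A : (0 <= I A)%E.
Proof. by apply: integral_ge0 => y _; rewrite lee_fin. Qed.

Let I_le1 A : measurable A -> (I A <= 1)%E.
Proof.
move=> mA; rewrite -hint; apply: ge0_subset_integral => //.
by move=> y _; rewrite lee_fin.
Qed.

Let I_fin A : measurable A -> I A \is a fin_num.
Proof.
move=> mA; rewrite ge0_fin_numE; [|exact: I_ge0]. have := I_le1 mA; move=> H; apply: (le_lt_trans H); exact: ltry.
Qed.

Let Isplit (t : R) : (I [set y | (t <= h y)%R] + I [set y | (h y < t)%R] = 1)%E.
Proof.
rewrite /I -ge0_integral_setU//.
- rewrite -hint; congr integral; apply/seteqP; split => y //= _.
  by case: (leP t (h y)) => _; [left|right].
- exact: mle.
- exact: mlt.
- exact: measurable_funTS mhE.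
- by move=> y _; rewrite lee_fin.
- rewrite disj_set2E; apply/eqP/seteqP; split => y //= [] /le_lt_trans H /H.
  by rewrite ltxx.
Qed.

Definition Gr t := fine (I [set y | h y < t]).

Lemma GrE t : (Gr t)%:E = I [set y | h y < t].
Proof. by rewrite /Gr fineK//; apply: I_fin; exact: mlt. Qed.

Lemma gE t : Rintegral mu [set y | t <= h y] h = 1 - Gr t.
Proof.
have Lf : I [set y | t <= h y] \is a fin_num by apply: I_fin; exact: mle.
have := Isplit t; rewrite -GrE -(fineK Lf) -EFinD => -[].
by rewrite /Rintegral => <-; rewrite addrK.
Qed.

Lemma Gr_ge0 t : 0 <= Gr t.
Proof. by rewrite -lee_fin GrE. Qed.

Lemma Gr_le1 t : Gr t <= 1.
Proof. rewrite -lee_fin GrE; apply: I_le1; exact: mlt. Qed.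

Lemma Gr_nd s t : s <= t -> Gr s <= Gr t.
Proof.
move=> st; rewrite -lee_fin !GrE; apply: ge0_subset_integral.
- exact: mlt.
- exact: mlt.
- exact: measurable_funTS mhE.
- by move=> y _; rewrite lee_fin.
- by move=> y /= /lt_le_trans; apply.
Qed.

Lemma Gr_le0 t : t <= 0 -> Gr t = 0.
Proof.
move=> t0; apply/EFin_inj; rewrite GrE.
have -> : [set y | h y < t] = set0.
  by apply/seteqP; split => y //= /lt_le_trans /(_ t0); rewrite ltNge h0.
by rewrite /I integral_set0.
Qed.


Lemma Gr_left t a : a < Gr t -> exists2 s, s < t & a < Gr s.
Proof.
move=> aG; have [//|H] := pselect (exists2 s, s < t & a < Gr s).
exfalso.
pose F n := [set y | h y < t - n.+1%:R^-1].
have nndF : nondecreasing_seq F.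
  move=> n m nm; rewrite subsetEset => y /= Hy; apply: (lt_le_trans Hy).
  by rewrite lerD2l lerN2 lef_pV2 ?posrE// ler_nat ltnS.
have UF : \bigcup_n F n = [set y | h y < t].
  apply/seteqP; split => y /=.
    move=> [n _]; rewrite /F /= => Hy; have hp : 0 < n.+1%:R^-1 :> R by rewrite invr_gt0.
    by apply: (lt_le_trans Hy); rewrite lerBlDr lerDl ltW.
  move=> Hy; have tp : 0 < (t - h y)^-1 by rewrite invr_gt0 subr_gt0.
  exists (Num.Def.archi_bound (t - h y)^-1) => //=.
  have := archi_boundP (ltW tp); set n := Num.Def.archi_bound _ => Hn.
  have hn : n.+1%:R^-1 < t - h y.
    rewrite -[t - h y]invrK ltf_pV2 ?posrE//.
    by apply: (lt_trans Hn); rewrite ltr_nat.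
  rewrite /F /=; move: hn; set e := n.+1%:R^-1 => hn; lra.
have cv : (\int[mu]_(x in F i) (h x)%:E @[i --> \oo] -->
            \int[mu]_(x in \bigcup_i F i) (h x)%:E)%E.
  apply: ge0_nondecreasing_set_cvg_integral => //.
  - by move=> n; exact: mlt.
  - by move=> n; exact: measurable_funTS mhE.
  - by move=> n y _; rewrite lee_fin.
have : (I [set y | (h y < t)%R] <= a%:E)%E.
  rewrite /I -UF -(cvg_lim _ cv) //; apply: lime_le.
    by apply/cvg_ex; eexists; exact: cv.
  apply: nearW => n; rewrite /F -/(I _) -GrE lee_fin leNgt; apply/negP => aGs.
  apply: H; exists (t - n.+1%:R^-1) => //.
  by rewrite ltrBlDr ltrDl invr_gt0.
by rewrite -GrE lee_fin leNgt aG.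
Qed.


Lemma Gr_infty a : a < 1 -> exists M, a < Gr M.
Proof.
move=> a1; have [//|H] := pselect (exists M, a < Gr M).
exfalso.
pose F n := [set y | h y < n%:R].
have nndF : nondecreasing_seq F.
  move=> n m nm; rewrite subsetEset => y /= Hy; apply: (lt_le_trans Hy).
  by rewrite ler_nat.
have UF : \bigcup_n F n = setT.
  apply/seteqP; split => y // _.
  exists (Num.Def.archi_bound (h y)) => //=.
  exact: archi_boundP.
have cv : (\int[mu]_(x in F i) (h x)%:E @[i --> \oo] -->
            \int[mu]_(x in \bigcup_i F i) (h x)%:E)%E.
  apply: ge0_nondecreasing_set_cvg_integral => //.
  - by move=> n; exact: mlt.
  - by move=> n; exact: measurable_funTS mhE.
  - by move=> n y _; rewrite lee_fin.
have : (1 <= a%:E)%E.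
  rewrite -hint -UF -(cvg_lim _ cv) //; apply: lime_le.
    by apply/cvg_ex; eexists; exact: cv.
  apply: nearW => n; rewrite /F -/(I _) -GrE lee_fin leNgt; apply/negP => aGs.
  by apply: H; exists n%:R.
by rewrite lee_fin leNgt a1.
Qed.

End dens.
Section abs.
Variables (R : realType) (g : R -> R).
Hypotheses (gni : forall s t, s <= t -> g t <= g s)
  (g0 : g 0 = 1)
  (gl : forall t c, g t < c -> exists2 s, s < t & g s < c)
  (ginf : forall c, 0 < c -> exists M, g M < c).

Lemma char c t : 0 < c -> c <= 1 -> 0 <= t ->
  (c <= g t) <-> (t <= sup [set u | 0 <= u /\ c <= g u]).
Proof.
move=> c0 c1 t0; set S := [set u | 0 <= u /\ c <= g u].
have S0 : S 0 by split; rewrite ?g0.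
have [M gM] := ginf c0.
have ubM : ubound S M.
  move=> u [u0 cu]; rewrite leNgt; apply/negP => /ltW /gni gu.
  by move: (le_lt_trans cu (le_lt_trans gu gM)); rewrite ltxx.
have hs : has_sup S by split; [exists 0|exists M].
split => [ct|tS].
  by apply: ub_le_sup; [exists M|split].
rewrite leNgt; apply/negP => /gl [s st gs].
have ubs : ubound S s.
  move=> u [u0 cu]; rewrite leNgt; apply/negP => /ltW /gni gu.
  by move: (le_lt_trans cu (le_lt_trans gu gs)); rewrite ltxx.
have := ge_sup (ex_intro _ 0 S0) ubs.
by move=> /(le_trans tS); rewrite leNgt st.
Qed.

End abs.

Lemma measurable_fun_sq (R : realType) (g1 g2 : R -> R)
  (n1 : forall s t, s <= t -> g1 t <= g1 s)
  (n2 : forall s t, s <= t -> g2 t <= g2 s) (D : set R) : measurable D ->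
  measurable_fun D (fun t => ((g1 t - g2 t) ^+ 2)%:E).
Proof.
move=> mD; apply/measurable_EFinP; apply: measurable_funX.
apply: measurable_funB; apply: nonincreasing_measurable => //.
Qed.

Lemma int_sq_lt (R : realType) (g1 g2 : R -> R)
  (n1 : forall s t, s <= t -> g1 t <= g1 s)
  (n2 : forall s t, s <= t -> g2 t <= g2 s)
  (gl : forall t c, g1 t < c -> exists2 s, s < t & g1 s < c)
  (t0 : R) : 0 < t0 -> g1 t0 < g2 t0 ->
  (0 < \int[@lebesgue_measure R]_(t in `[0%R, +oo[%classic)
           ((g1 t - g2 t) ^+ 2)%:E)%E.
Proof.
move=> t0p lt12; set d := (g2 t0 - g1 t0) / 3.
have hd : 3 * d = g2 t0 - g1 t0 by rewrite /d; field.
have dp : 0 < d by rewrite divr_gt0 // subr_gt0.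
have [s st gs] : exists2 s, s < t0 & g1 s < g1 t0 + d by apply: gl; rewrite ltrDl.
have [s' [s'0 s't0 gs']] : exists s' : R, [/\ 0 <= s', s' < t0 & g1 s' < g1 t0 + d].
  case: (leP 0 s) => s0; first by exists s.
  exists 0; split => //; apply: le_lt_trans gs; apply: n1; exact: ltW.
have key : forall u : R, s' <= u <= t0 -> d ^+ 2 <= (g1 u - g2 u) ^+ 2.
  move=> u /andP[su ut]; have := n1 _ _ su; have := n2 _ _ ut => h2 h1.
  have hdu : d <= g2 u - g1 u by lra.
  nra.
set A := (`[s', t0]%classic : set R).
set B := (`[0%R, +oo[%classic : set R).
have AB : A `<=` B.
  move=> u; rewrite /A /B /= !in_itv /= andbT => /andP[su _].
  exact: le_trans su.
have le1 := @ge0_subset_integral _ _ _ (@lebesgue_measure R) A B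
  (measurable_itv _) (measurable_itv _) _
  (measurable_fun_sq n1 n2 (measurable_itv _)) (fun u _ => sqr_ge0 _) AB.
have le2 : (\int[@lebesgue_measure R]_(t in A) (cst (d ^+ 2)%:E) t <=
    \int[@lebesgue_measure R]_(t in A) ((g1 t - g2 t) ^+ 2)%:E)%E.
  apply: ge0_le_integral => //.
  - exact: measurable_itv.
  - by move=> u _; rewrite lee_fin sqr_ge0.
  - exact: (measurable_fun_sq (D := A) n1 n2 (measurable_itv _)).
rewrite integral_cst in le2; last exact: measurable_itv.
have HA : (@lebesgue_measure R A = (t0 - s')%:E)%E.
  by rewrite /A lebesgue_measure_itv /= lte_fin s't0 EFinB.
have le3 : (((d ^+ 2) * (t0 - s'))%:E <=
    \int[@lebesgue_measure R]_(t in A) (((g1 t - g2 t) ^+ 2)%R)%:E)%E.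
  by rewrite EFinM -HA; exact: le2.
apply: (lt_le_trans _ le1); apply: (lt_le_trans _ le3); rewrite lte_fin.
by apply: mulr_gt0; [exact: exprn_gt0|rewrite subr_gt0].
Qed.

Unset Implicit Arguments.

Section mainsec.
Variables (R : realType) (X : Type) (f : X -> R -> R).
Hypotheses (f_ge0 : forall x y, 0 <= f x y)
  (f_cont : forall x, continuous (f x))
  (f_int : forall x, (\int[@lebesgue_measure R]_y (f x y)%:E = 1)%E).

Let gpE x t : gprof f x t = 1 - Gr (f x) t.
Proof. exact: (gE (f_ge0 x) (f_cont x) (f_int x)). Qed.

Let gni x : forall s t, s <= t -> gprof f x t <= gprof f x s.
Proof.
move=> s t st; rewrite !gpE lerD2l lerN2.
exact: (Gr_nd (f_ge0 x) (f_cont x) (f_int x)).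
Qed.

Let g0 x : gprof f x 0 = 1.
Proof. by rewrite gpE (Gr_le0 (f_ge0 x) (f_cont x) (f_int x)) // subr0. Qed.

Let g_ge0 x t : 0 <= gprof f x t.
Proof. by rewrite gpE subr_ge0 (Gr_le1 (f_ge0 x) (f_cont x) (f_int x)). Qed.

Let g_le1 x t : gprof f x t <= 1.
Proof. by rewrite gpE lerBlDr lerDl (Gr_ge0 (f_ge0 x) (f_cont x) (f_int x)). Qed.

Let gl x : forall t c, gprof f x t < c -> exists2 s, s < t & gprof f x s < c.
Proof.
move=> t c; rewrite gpE => H.
have [|s st Hs] := Gr_left (f_ge0 x) (f_cont x) (f_int x) (t := t) (a := 1 - c).
  by lra.
by exists s => //; rewrite gpE; lra.
Qed.

Let ginf x : forall c : R, 0 < c -> exists M, gprof f x M < c.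
Proof.
move=> c c0.
have [|M HM] := Gr_infty (f_ge0 x) (f_cont x) (f_int x) (a := 1 - c).
  by lra.
by exists M; rewrite gpE; lra.
Qed.

Let charx x alpha t : 0 < alpha < 1 -> 0 <= t ->
  (1 - alpha <= gprof f x t) <-> (t <= tstar f x alpha).
Proof.
move=> /andP[a0 a1] t0; apply: (char (gni x) (g0 x) (gl x) (ginf x)) => //; lra.
Qed.

Lemma part2 xa xb :
  (forall alpha : R, 0 < alpha < 1 -> tstar f xa alpha = tstar f xb alpha) ->
  forall t, 0 <= t -> ~ (gprof f xa t < gprof f xb t).
Proof.
move=> E t t0 lt.
set c := (gprof f xa t + gprof f xb t) / 2.
have ha := g_ge0 xa t; have hb := g_le1 xb t.
have c1 : gprof f xa t < c by rewrite /c; lra.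
have c2 : c < gprof f xb t by rewrite /c; lra.
have al : 0 < 1 - c < 1 by apply/andP; split; lra.
have cE : 1 - (1 - c) = c by ring.
have := (charx xb (1 - c) t al t0).1; rewrite cE => /(_ (ltW c2)).
rewrite -E // -(charx xa (1 - c) t al t0) cE => H.
by move: (le_lt_trans H c1); rewrite ltxx.
Qed.

Lemma part1 xa xb : prof_equiv f xa xb ->
  forall t, 0 <= t -> gprof f xa t = gprof f xb t.
Proof.
rewrite /prof_equiv /dprof => Hp.
set I := (\int[_]_(_ in _) _)%E in Hp.
have Ige0 : (0 <= I)%E by apply: integral_ge0 => u _; rewrite lee_fin sqr_ge0.
have I0 : I = 0%E by rewrite -(sqr_sqrte Ige0) Hp expe2 mule0.
move=> t; rewrite le_eqVlt => /orP[/eqP <-|tp]; first by rewrite !g0.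
apply/eqP; rewrite eq_le !leNgt; apply/andP; split; apply/negP => H.
- have := int_sq_lt (gni xb) (gni xa) (gl xb) tp H.
  have -> : (\int[@lebesgue_measure R]_(t in `[0%R, +oo[%classic)
      ((gprof f xb t - gprof f xa t) ^+ 2)%:E)%E = I.
    by apply: eq_integral => u _; rewrite -opprB sqrrN.
  by rewrite I0 ltxx.
- have := int_sq_lt (gni xa) (gni xb) (gl xa) tp H.
  by rewrite -/I I0 ltxx.
Qed.

End mainsec.

Theorem theorem5 (R : realType) (X : Type) (f : X -> R -> R)
  (f_ge0 : forall x y, 0 <= f x y)
  (f_cont : forall x, continuous (f x))
  (f_int : forall x, (\int[@lebesgue_measure R]_y (f x y)%:E = 1)%E) :
  (forall xa xb, prof_equiv f xa xb ->
     forall alpha : R, 0 < alpha < 1 -> tstar f xa alpha = tstar f xb alpha) /\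
  (forall r : X -> X -> Prop,
     (forall x, r x x) ->
     (forall x y, r x y -> r y x) ->
     (forall x y z, r x y -> r y z -> r x z) ->
     (forall xa xb, r xa xb ->
        forall alpha : R, 0 < alpha < 1 -> tstar f xa alpha = tstar f xb alpha) ->
     forall xa xb, r xa xb -> prof_equiv f xa xb).
Proof.
split.
  move=> xa xb Hp alpha al.
  have E := @part1 R X f f_ge0 f_cont f_int xa xb Hp.
  rewrite /tstar; congr sup; apply/seteqP; split => u /= [u0 H]; split => //.
    by rewrite -E.
  by rewrite E.
move=> r _ _ _ Hr xa xb rab.
have E : forall t, 0 <= t -> gprof f xa t = gprof f xb t.
  move=> t t0; apply/eqP; rewrite eq_le !leNgt; apply/andP; split; apply/negP.
  - exact: (@part2 R X f f_ge0 f_cont f_int xb xa (fun a h => esym (Hr _ _ rab a h)) t t0).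
  - exact: (@part2 R X f f_ge0 f_cont f_int xa xb (Hr _ _ rab) t t0).
rewrite /prof_equiv /dprof.
rewrite (eq_integral (fun _ => 0%E)); first by rewrite integral0 sqrte0.
move=> t; rewrite inE /= in_itv /= andbT => t0.
by rewrite E // subrr expr0n.
Qed.
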